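(* Let $q \geq 2$ be an integer and let $n=(q^2+1)(q+1)$. Let $H_0$ be a graph on $n$ vertices in which each vertex may carry at most one loop, with symmetric $0/1$ adjacency matrix $M$ (where $M_{vv}=1$ exactly when $v$ carries a loop), such that every row of $M$ sums to $q+1$, and such that all eigenvalues of $M$ other than the largest one ($=q+1$) have absolute value at most $\sqrt{2q}$. Let $H$ be the simple graph obtained from $H_0$ by deleting all loops, and assume $H$ contains no cycle of length $3$ or $4$. Let $G_1$ be the simple graph on $V(H)$ in which two distinct vertices $x,y$ are adjacent if and only if there is a vertex $w \notin\{x,y\}$ adjacent in $H$ to both $x$ and $y$ (equivalently, $G_1$ is the union over $v \in V(H)$ of the complete graphs on $N_H(v)$). Then for every $X \subseteq V(G_1)$, \[\left|e_{G_1}(X) - \frac{q}{q^2+1}\binom{|X|}{2}\right| \leq (2q+1)|X|,\] i.e. $G_1$ is $\bigl(q/(q^2+1),\,2q+1\bigr)$-jumbled.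
   Context: For a graph $G$ and $X \subseteq V(G)$, $e_G(X)$ denotes the number of edges of $G$ with both endpoints in $X$. A graph $G$ is $(p,\beta)$-jumbled if $\left|e_G(X) - p\binom{|X|}{2}\right| \leq \beta |X|$ for all $X \subseteq V(G)$. $N_H(v)$ denotes the set of neighbours of $v$ in $H$. *)

(* Defs.v *)
From HB Require Import structures.
From mathcomp Require Import all_boot all_order all_algebra.
From mathcomp Require Import algC.
Set Implicit Arguments. Unset Strict Implicit. Unset Printing Implicit Defensive.
Import Order.TTheory GRing.Theory Num.Theory.

Definition adjmx (n : nat) (adj : rel 'I_n) : 'M[algC]_n :=
  \matrix_(i, j) (adj i j)%:R%R.

Definition noloops (n : nat) (adj : rel 'I_n) : rel 'I_n :=
  fun x y => (x != y) && adj x y.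

Definition no_C3 (n : nat) (h : rel 'I_n) : Prop :=
  forall a b c : 'I_n, a != b -> b != c -> a != c ->
    ~ [&& h a b, h b c & h c a].

Definition no_C4 (n : nat) (h : rel 'I_n) : Prop :=
  forall a b c d : 'I_n, uniq [:: a; b; c; d] ->
    ~ [&& h a b, h b c, h c d & h d a].

Definition G1 (n : nat) (h : rel 'I_n) : rel 'I_n :=
  fun x y => (x != y) &&
    [exists w : 'I_n, [&& w != x, w != y, h w x & h w y]].

Definition e_in (n : nat) (g : rel 'I_n) (X : {set 'I_n}) : nat :=
  #|[set p : 'I_n * 'I_n |
      [&& (val p.1 < val p.2)%N, p.1 \in X, p.2 \in X & g p.1 p.2]]|.

Definition jumbled (n : nat) (g : rel 'I_n) (p beta : rat) : Prop :=
  forall X : {set 'I_n},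
    (`| (e_in g X)%:R - p * ('C(#|X|, 2))%:R | <= beta * (#|X|)%:R)%R.

(* Main.v *)
Require Import Defs.
From HB Require Import structures.
From mathcomp Require Import all_boot all_order all_algebra.
From mathcomp Require Import algC.
From mathcomp Require Import spectral sesquilinear.
From mathcomp Require Import ring lra zify.
Set Implicit Arguments. Unset Strict Implicit. Unset Printing Implicit Defensive.
Import Order.TTheory GRing.Theory Num.Theory.

Section Spec.
Local Open Scope ring_scope.
Local Open Scope sesquilinear_scope.
Definition nrm2 n (v : 'rV[algC]_n) : algC := \sum_j `|v 0 j| ^+ 2.

Lemma nrm2E n (v : 'rV[algC]_n) : (v *m v ^t*) 0 0 = nrm2 v.
Proof. by rewrite mxE; apply: eq_bigr => j _; rewrite !mxE normCK. Qed.

Lemma dotE n (u v : 'rV[algC]_n) : (u *m v ^t*) 0 0 = \sum_j u 0 j * (v 0 j)^*.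
Proof. by rewrite mxE; apply: eq_bigr => j _; rewrite !mxE. Qed.

Lemma nrm2_unitary n (v : 'rV[algC]_n) (P : 'M[algC]_n) :
  P *m P ^t* = 1%:M -> nrm2 (v *m P) = nrm2 v.
Proof.
move=> hP; rewrite -!nrm2E trmx_mul map_mxM mulmxA -(mulmxA v) hP mulmx1 //.
Qed.

Lemma char_poly_conj n (P A : 'M[algC]_n) : P \in unitmx ->
  char_poly (invmx P *m A *m P) = char_poly A.
Proof.
move=> Pu; rewrite /char_poly /char_poly_mx.
set Pi := map_mx polyC (invmx P); set Pc := map_mx polyC P.
have PiP : Pi *m Pc = 1%:M by rewrite -map_mxM mulVmx // map_mx1.
have -> : 'X%:M - map_mx polyC (invmx P *m A *m P) = Pi *m ('X%:M - map_mx polyC A) *m Pc.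
  rewrite !map_mxM mulmxBr mulmxBl -!mulmxA; congr (_ - _).
  by rewrite -scalar_mxC mulmxA PiP mul1mx.
by rewrite !det_mulmx mulrAC -det_mulmx PiP det1 mul1r.
Qed.

Lemma spec_bound n (M : 'M[algC]_n) (c r : algC) (s : seq algC) (x : 'rV[algC]_n) :
  M \is hermsymmx ->
  char_poly M = ('X - c%:P) * \prod_(a <- s) ('X - a%:P) ->
  (forall a, a \in s -> `|a| ^+ 2 <= r) -> r < `|c| ^+ 2 ->
  (const_mx 1 : 'rV[algC]_n) *m M = c *: const_mx 1 ->
  `|c| ^+ 2 * `|\sum_j x 0 j| ^+ 2 <= n%:R * nrm2 (x *m M) /\
  n%:R * nrm2 (x *m M) <= `|c| ^+ 2 * `|\sum_j x 0 j| ^+ 2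
     + r * (n%:R * nrm2 x - `|\sum_j x 0 j| ^+ 2).
Proof.
move=> hM hchar hs hcr h1.
have /orthomx_spectralP hP := hermitian_normalmx hM.
set P := spectralmx M in hP; set d := spectral_diag M in hP.
have Pu : P \is unitarymx := spectral_unitarymx M.
have PPt : P *m P ^t* = 1%:M by apply/unitarymxP.
have Punit : P \in unitmx := unitarymx_unit Pu.
have hinv : invmx P = P ^t* by rewrite invmx_unitary.
have PtP : P ^t* *m P = 1%:M by rewrite -hinv mulVmx.
have hcd : char_poly M = \prod_(i < n) ('X - (d 0 i)%:P).
  rewrite hP char_poly_conj // char_poly_trig ?diag_mx_is_trig //.
  by apply: eq_bigr => i _; rewrite mxE eqxx mulr1n.
have hperm : perm_eq (c :: s) [seq d 0 i | i <- enum 'I_n].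
  apply: prod_XsubC_eq; rewrite big_cons -hchar hcd big_map big_enum //.
have cs : c \notin s.
  by apply/negP => cs; have := lt_le_trans hcr (hs c cs); rewrite ltxx.
have hcnt : #|[pred i : 'I_n | d 0 i == c]| = 1%N.
  have := permP hperm (pred1 c); rewrite count_map /= eqxx (count_memPn cs).
  rewrite addn0 => h; apply: (etrans _ (esym h)); rewrite -size_filter cardE /enum_mem -filter_predI.
  by congr size; apply: eq_filter => i /=; rewrite andbT.
have /card1P [i0 hi0] : #|[pred i : 'I_n | d 0 i == c]| == 1%N by rewrite hcnt.
have hdi0 : d 0 i0 = c by apply/eqP; have := hi0 i0; rewrite !inE eqxx.
have hdi : forall i, i != i0 -> `|d 0 i| ^+ 2 <= r.
  move=> i ni; have : d 0 i \in c :: s.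
    by rewrite (perm_mem hperm); apply/mapP; exists i; rewrite ?mem_enum.
  rewrite in_cons; case/orP => [/eqP dc|]; last exact: hs.
  by move: ni; have := hi0 i; rewrite !inE dc eqxx => <-.
set z := x *m P ^t*.
have hx : x = z *m P by rewrite /z -mulmxA PtP mulmx1.
have hxM : x *m M = (z *m diag_mx d) *m P by rewrite hP hinv /z !mulmxA.
set e := (const_mx 1 : 'rV[algC]_n) *m P ^t*.
have h1e : (const_mx 1 : 'rV[algC]_n) = e *m P by rewrite /e -mulmxA PtP mulmx1.
have he : forall i, e 0 i * d 0 i = c * e 0 i.
  have : e *m diag_mx d = c *: e.
    rewrite /e scalemxAl -h1 hP hinv !mulmxA -(mulmxA _ P) PPt mulmx1 //.
  by move=> /matrixP h i; have := h 0 i; rewrite mul_mx_diag !mxE.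
have he0 : forall i, i != i0 -> e 0 i = 0.
  move=> i ni; have := he i; rewrite mulrC => /eqP; rewrite -subr_eq0 -mulrBl.
  rewrite mulf_eq0 => /orP [|/eqP //]; rewrite subr_eq0 => dc.
  by move: ni; have := hi0 i; rewrite !inE dc => <-.
have hN : \sum_j x 0 j = z 0 i0 * (e 0 i0)^*.
  have -> : \sum_j x 0 j = (x *m (const_mx 1 : 'rV[algC]_n) ^t*) 0 0.
    by rewrite dotE; apply: eq_bigr => j _; rewrite mxE conjC1 mulr1.
  rewrite hx h1e trmx_mul map_mxM mulmxA -(mulmxA z) PPt mulmx1 dotE.
  rewrite (bigD1 i0) //= big1 ?addr0 // => i ni; rewrite he0 // conjC0 mulr0 //.
have hn : n%:R = `|e 0 i0| ^+ 2.
  have : nrm2 (const_mx 1 : 'rV[algC]_n) = n%:R.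
    rewrite /nrm2 (eq_bigr (fun _ => 1)) ?sumr_const ?card_ord //.
    by move=> j _; rewrite mxE normr1 expr1n.
  rewrite h1e nrm2_unitary // => <-; rewrite /nrm2 (bigD1 i0) //= big1 ?addr0 //.
  by move=> i ni; rewrite he0 // normr0 expr0n.
have hS : nrm2 (x *m M) = `|z 0 i0| ^+ 2 * `|c| ^+ 2 +
    \sum_(i | i != i0) `|z 0 i| ^+ 2 * `|d 0 i| ^+ 2.
  rewrite hxM nrm2_unitary // /nrm2 (bigD1 i0) //=; congr (_ + _).
    by rewrite mul_mx_diag mxE normrM exprMn hdi0.
  by apply: eq_bigr => i _; rewrite mul_mx_diag mxE normrM exprMn.
have hK : nrm2 x = `|z 0 i0| ^+ 2 + \sum_(i | i != i0) `|z 0 i| ^+ 2.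
  by rewrite hx nrm2_unitary // /nrm2 (bigD1 i0).
have hNn : `|\sum_j x 0 j| ^+ 2 = n%:R * `|z 0 i0| ^+ 2.
  by rewrite hN normrM norm_conjC exprMn hn mulrC.
set T := \sum_(i | i != i0) `|z 0 i| ^+ 2 * `|d 0 i| ^+ 2 in hS.
set U := \sum_(i | i != i0) `|z 0 i| ^+ 2 in hK.
have T0 : 0 <= T by apply: sumr_ge0 => i _; rewrite mulr_ge0 ?exprn_ge0.
have TU : T <= r * U.
  rewrite /T /U mulr_sumr; apply: ler_sum => i ni.
  by rewrite mulrC ler_wpM2r ?exprn_ge0 ?hdi.
have n0 : 0 <= n%:R :> algC by rewrite ler0n.
rewrite hS hK hNn; split.
  rewrite mulrDr mulrCA [`|z 0 i0| ^+ 2 * _]mulrC lerDl.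
  by rewrite mulr_ge0.
rewrite mulrDr [n%:R * (_ + U)]mulrDr [n%:R * _ + n%:R * U]addrC addrK.
rewrite mulrCA [`|z 0 i0| ^+ 2 * _]mulrC.
rewrite [`|c| ^+ 2 * (n%:R * _)]mulrCA mulrA lerD2l.
by rewrite mulrCA ler_wpM2l.
Qed.
End Spec.
Section Comb.
Variables (n : nat) (adj : rel 'I_n).
Hypothesis hsym : symmetric adj.
Hypothesis hC4 : no_C4 (noloops adj).
Local Notation h := (noloops adj).

Lemma h_sym : symmetric h.
Proof. by move=> x y; rewrite /noloops eq_sym hsym. Qed.

Lemma h_neq x y : h x y -> x != y.
Proof. by case/andP. Qed.

Lemma G1_sym : symmetric (G1 h).
Proof.
move=> x y; rewrite /G1 eq_sym; congr (_ && _); apply: eq_existsb => w.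
by case: (w != x) (w != y) (h w x) (h w y) => [] [] [] [].
Qed.

Lemma G1_sum a b : a != b -> (G1 h a b : nat) = (\sum_w (h w a && h w b))%N.
Proof.
move=> nab; rewrite /G1 nab /=.
case: existsP => [[w0 /and4P [w0a w0b hw0a hw0b]]|nex].
  rewrite (bigD1 w0) /= ?hw0a ?hw0b // big1 // => w nw.
  apply/eqP; rewrite eqb0; apply/negP => /andP [hwa hwb].
  apply: (hC4 (a := a) (b := w0) (c := b) (d := w)); last first.
    by rewrite h_sym hw0a hw0b h_sym hwb hwa.
  have wa := h_neq hwa; have wb := h_neq hwb.
  rewrite /= !inE !negb_or (eq_sym a w0) w0a nab (eq_sym a w) wa w0b.
  by rewrite (eq_sym w0 w) nw (eq_sym b w) wb.
rewrite big1 // => w _; apply/eqP; rewrite eqb0; apply/negP => /andP [hwa hwb].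
by apply: nex; exists w; rewrite (h_neq hwa) (h_neq hwb) hwa hwb.
Qed.

Definition cp (X : {set 'I_n}) w := (\sum_a ((a \in X) && h w a))%N.

Lemma e_inE (g : rel 'I_n) X : e_in g X =
  (\sum_a \sum_b [&& (val a < val b)%N, a \in X, b \in X & g a b])%N.
Proof.
rewrite /e_in -sum1_card big_mkcond /= [RHS]pair_bigA /=.
apply: eq_bigr => [[a b]] _; rewrite inE /=.
by case: ifP.
Qed.

Lemma e_in2 X : (2 * e_in (G1 h) X =
  \sum_a \sum_b [&& a \in X, b \in X & G1 h a b])%N.
Proof.
rewrite e_inE mul2n -addnn.
have H : (\sum_a \sum_b [&& (val a < val b)%N, a \in X, b \in X & G1 h a b] =
   \sum_a \sum_b [&& (val b < val a)%N, a \in X, b \in X & G1 h a b])%N.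
  rewrite exchange_big /=; apply: eq_bigr => a _; apply: eq_bigr => b _.
  by rewrite (G1_sym b a); congr (_ && _); rewrite andbCA.
rewrite {2}H -big_split /=; apply: eq_bigr => a _; rewrite -big_split /=.
apply: eq_bigr => b _.
case: (ltngtP (val a) (val b)) => [||/val_inj ->] //=.
  by case: (_ && _).
by rewrite /G1 eqxx !andbF.
Qed.

Lemma e_sum X : (2 * e_in (G1 h) X + \sum_w cp X w = \sum_w cp X w ^ 2)%N.
Proof.
have hsq : forall w, (cp X w ^ 2 = \sum_a \sum_b
    (((a \in X) && h w a) * ((b \in X) && h w b)))%N.
  move=> w; rewrite expnS expn1 /cp big_distrl /=.
  by apply: eq_bigr => a _; rewrite big_distrr.
rewrite (eq_bigr _ (fun w _ => hsq w)) [in RHS]exchange_big /=.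
under [in RHS]eq_bigr do rewrite exchange_big /=.

rewrite e_in2 /cp [X in _ + X]exchange_big -big_split /=; apply: eq_bigr => a _.
have Ga : G1 h a a = false by rewrite /G1 eqxx.
rewrite (bigD1 a) //= [in RHS](bigD1 a) //= Ga !andbF add0n addnC.
congr (_ + _).
  by apply: eq_bigr => w _; case: (_ && _).
apply: eq_bigr => b nb.
have -> : ([&& a \in X, b \in X & G1 h a b] : nat) = ((a \in X) * (b \in X) * G1 h a b)%N.
  by case: (a \in X); case: (b \in X); case: (G1 h a b).
rewrite G1_sum 1?eq_sym // big_distrr /=; apply: eq_bigr => w _.
by case: (a \in X); case: (b \in X); case: (h w a); case: (h w b).
Qed.

Definition cc (X : {set 'I_n}) w := (\sum_a ((a \in X) && adj a w))%N.
Definition Ld (X : {set 'I_n}) w : nat := (w \in X) && adj w w.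

Lemma cc_split X w : cc X w = (cp X w + Ld X w)%N.
Proof.
rewrite /cc /cp (bigD1 w) //= [in RHS](bigD1 w) //= /noloops eqxx /= andbF add0n.
rewrite addnC /Ld; congr (_ + _); apply: eq_bigr => a na.
by rewrite eq_sym na hsym.
Qed.

Variable d : nat.
Hypothesis hdeg : forall x, #|[set y | adj x y]| = d.

Lemma deg_sum x : (\sum_y adj x y)%N = d.
Proof.
by rewrite -(hdeg x) -sum1_card [RHS]big_mkcond /=; apply: eq_bigr => y _; rewrite inE.
Qed.

Lemma sum_cc X : (\sum_w cc X w = d * #|X|)%N.
Proof.
rewrite /cc exchange_big /= -sum1_card big_distrr /= [RHS]big_mkcond /=.
apply: eq_bigr => a _; case: (a \in X) => /=; last by rewrite big1.
by rewrite muln1 -(deg_sum a); apply: eq_bigr => y _; rewrite hsym.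
Qed.

Lemma cc_le X w : (cc X w <= d)%N.
Proof.
rewrite -(deg_sum w) /cc; apply: leq_sum => a _.
by rewrite hsym; case: (a \in X); case: (adj w a).
Qed.

Lemma sum_L X : (\sum_w Ld X w <= #|X|)%N.
Proof.
rewrite -sum1_card [X in (_ <= X)%N]big_mkcond /=; apply: leq_sum => w _.
by rewrite /Ld; case: (w \in X); case: (adj w w).
Qed.

Lemma S_eq X : (\sum_w cc X w ^ 2 =
  2 * e_in (G1 h) X + \sum_w cc X w + 2 * \sum_w cp X w * Ld X w)%N.
Proof.
have h1 : forall w, (cc X w ^ 2 = cp X w ^ 2 + Ld X w + 2 * (cp X w * Ld X w))%N.
  move=> w; rewrite cc_split.
  have : (Ld X w * Ld X w = Ld X w)%N by rewrite /Ld; case: (_ && _).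
  rewrite !expnS expn0 !muln1; lia.
rewrite (eq_bigr _ (fun w _ => h1 w)) !big_split /= -e_sum.
rewrite (eq_bigr _ (fun w _ => cc_split X w)) big_split /= big1_eq.
lia.
Qed.

Lemma S_lo X : (2 * e_in (G1 h) X + d * #|X| <= \sum_w cc X w ^ 2)%N.
Proof. by rewrite S_eq sum_cc leq_addr. Qed.

Lemma S_hi X : (1 <= d)%N ->
  (\sum_w cc X w ^ 2 <= 2 * e_in (G1 h) X + d * #|X| + 2 * (d.-1 * #|X|))%N.
Proof.
move=> d1; rewrite S_eq sum_cc leq_add2l leq_mul2l /=.
have hw : forall w, (cp X w * Ld X w <= d.-1 * Ld X w)%N.
  move=> w; have := cc_le X w; rewrite cc_split /Ld.
  case: ((w \in X) && adj w w) => /=; last by rewrite !muln0.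
  rewrite !muln1; lia.
apply: (@leq_trans (\sum_w d.-1 * Ld X w)%N); first by apply: leq_sum => w _; exact: hw.
by rewrite -big_distrr leq_mul2l sum_L orbT.
Qed.

End Comb.
Lemma bin2_twice k : (2 * 'C(k, 2) + k = k * k)%N.
Proof.
elim: k => [//|k IH]; rewrite binS bin1; lia.
Qed.

Section Rat.
Local Open Scope ring_scope.
Lemma final_rat (q e C k D : nat) : (0 < D)%N ->
  (D*e <= q*C + (2*q+1)*k*D)%N -> (q*C <= D*e + (2*q+1)*k*D)%N ->
  (`| e%:R - q%:R / D%:R * C%:R | <= (2 * q + 1)%:R * k%:R :> rat)%R.
Proof.
move=> D0 h1 h2.
have Dp : 0 < D%:R :> rat by rewrite ltr0n.
have hx : e%:R - q%:R / D%:R * C%:R = ((D*e)%:R - (q*C)%:R) / D%:R :> rat.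
  rewrite !natrM; field; rewrite pnatr_eq0 -lt0n //.
rewrite hx ler_norml ler_pdivrMr // ler_pdivlMr // -!natrM.
move: h1 h2; rewrite -!(ler_nat rat) !natrD !natrM => h1 h2.
apply/andP; split; lra.
Qed.
End Rat.

Lemma N2 q k e S D t : (1 <= q)%N -> (t + k = k * k)%N ->
  ((q+1)*(q+1) * (k*k) <= (q+1) * D * S)%N -> (S <= 2*e + (q+1)*k + 2*q*k)%N ->
  (q * t <= 2 * (D*e) + 2 * ((2*q+1)*k*D))%N.
Proof.
move=> q1 ht h1 h2.
have h2' : ((q+1) * D * S <= (q+1) * D * (2*e + (q+1)*k + 2*q*k))%N by rewrite leq_mul2l h2 orbT.
have h3 : ((q+1) * (k*k) <= D * (2*e + (3*q+1)*k))%N.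
  rewrite -(@leq_pmul2l (q+1)) ?addn1 // -addn1.
  have := leq_trans h1 h2'. lia.
have h4 : (D * ((3*q+1)*k) <= D * (2*((2*q+1)*k)))%N.
  rewrite leq_mul2l; apply/orP; right; rewrite mulnA leq_mul2r; apply/orP; right. lia.
have h5 : (q * t <= q * (k*k))%N by rewrite leq_mul2l -ht leq_addr orbT.
lia.
Qed.
Lemma N1 q k e S D t : (1 <= q)%N -> (1 <= D)%N -> (t + k = k * k)%N ->
  ((q+1)*D * S + 2*q*(k*k) <= (q+1)*(q+1) * (k*k) + 2*q*((q+1)*D)*k)%N -> (2*e + (q+1)*k <= S)%N ->
  (2 * (D*e) <= q * t + 2 * ((2*q+1)*k*D))%N.
Proof.
move=> q1 D1 ht h1 h2.
have h2' : ((q+1) * D * (2*e + (q+1)*k) <= (q+1) * D * S)%N by rewrite leq_mul2l h2 orbT.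
have F1 : (k*k <= q*(k*k))%N by rewrite leq_pmull.
have F2 : ((q*q+q)*k <= (q*q+q)*(D*k))%N by rewrite leq_mul2l leq_pmull ?orbT.
have F3 : ((q+1) * (q*t) + (q+1)*q*k = (q+1)*q*(k*k))%N by rewrite -ht; lia.
rewrite -(@leq_pmul2l (q+1)) ?addn1 // -addn1.
lia.
Qed.


Lemma sum_bool_card n (X : {set 'I_n}) : (\sum_j ((j \in X) : nat))%N = #|X|.
Proof. by rewrite -sum1_card [RHS]big_mkcond /=. Qed.

Lemma conv1 q n k S : n = ((q ^ 2 + 1) * (q + 1))%N -> (k ^ 2 <= n * k)%N ->
  (n * S <= (q + 1) ^ 2 * k ^ 2 + 2 * q * (n * k - k ^ 2))%N ->
  ((q+1)*(q^2+1) * S + 2*q*(k*k) <= (q+1)*(q+1) * (k*k) + 2*q*((q+1)*(q^2+1))*k)%N.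
Proof.
move=> -> h1; rewrite mulnBr.
have h2 : (2 * q * k ^ 2 <= 2 * q * ((q ^ 2 + 1) * (q + 1) * k))%N by rewrite leq_mul2l h1 orbT.
move: h1 h2; rewrite -!mulnn; lia.
Qed.

Lemma conv2 q n k S : n = ((q ^ 2 + 1) * (q + 1))%N ->
  ((q + 1) ^ 2 * k ^ 2 <= n * S)%N ->
  ((q+1)*(q+1) * (k*k) <= (q+1) * (q^2+1) * S)%N.
Proof. move=> ->; rewrite -!mulnn; lia. Qed.

Section Main.
Local Open Scope ring_scope.
Lemma main_gen (q n : nat) (hq : (2 <= q)%N) (hn : n = ((q ^ 2 + 1) * (q + 1))%N)
  (adj : rel 'I_n)
  (hsym : symmetric adj)
  (hdeg : forall x, #|[set y | adj x y]| = (q + 1)%N)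
  (hspec : exists s : seq algC,
     [/\ size s = n.-1,
         char_poly (adjmx adj)
           = ('X - ((q + 1)%:R)%:P) * \prod_(a <- s) ('X - a%:P)
       & forall a, a \in s -> `|a| <= sqrtC (2 * q)%:R]%R)
  (hC4 : no_C4 (noloops adj)) :
  jumbled (G1 (noloops adj)) (q%:R / (q ^ 2 + 1)%:R)%R (2 * q + 1)%:R%R.
Proof.
move=> X.
have [s [_ hchar hs]] := hspec.
set M := adjmx adj.
have hM : M \is hermsymmx.
  apply/is_hermitianmxP; rewrite expr0 scale1r; apply/matrixP => i j.
  by rewrite !mxE conjC_nat hsym.
have h1 : ((const_mx 1 : 'rV[algC]_n) *m M = (q + 1)%:R *: const_mx 1)%R.
  apply/rowP => j; rewrite !mxE mulr1 -(deg_sum hdeg j) natr_sum.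
  by apply: eq_bigr => i _; rewrite !mxE mul1r hsym.
have hs' : forall a, a \in s -> (`|a| ^+ 2 <= (2 * q)%:R)%R.
  move=> a /hs ha; rewrite -(sqrtCK (2 * q)%:R) !expr2.
  by apply: ler_pM => //; rewrite normr_ge0.
have hcr : ((2 * q)%:R < `|(q + 1)%:R| ^+ 2 :> algC)%R.
  by rewrite normr_nat -natrX ltr_nat; lia.
set k := #|X|.
set x : 'rV[algC]_n := \row_i ((i \in X) : nat)%:R.
have [L1 L2] := spec_bound x hM hchar hs' hcr h1.
have sx : (\sum_j x 0 j = k%:R)%R.
  by rewrite /k -sum_bool_card natr_sum; apply: eq_bigr => j _; rewrite mxE.
have nx : nrm2 x = k%:R.
  rewrite /k -sum_bool_card natr_sum; apply: eq_bigr => j _; rewrite mxE normr_nat.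
  by case: (j \in X); rewrite ?expr0n ?expr1n.
set S := (\sum_w cc adj X w ^ 2)%N.
have nxM : nrm2 (x *m M)%R = S%:R.
  rewrite /S natr_sum; apply: eq_bigr => w _.
  have -> : (x *m M)%R 0 w = (cc adj X w)%:R.
    rewrite !mxE /cc natr_sum; apply: eq_bigr => i _; rewrite !mxE -natrM.
    by case: (i \in X); case: (adj i w).
  by rewrite normr_nat natrX.
rewrite sx nxM !normr_nat -!natrX -!natrM ler_nat in L1.
have kn : (k <= n)%N by rewrite /k; apply: leq_trans (max_card _) _; rewrite card_ord.
have kkn : (k ^ 2 <= n * k)%N by rewrite expnS expn1 leq_mul2r kn orbT.
rewrite sx nx nxM !normr_nat -!natrX -!natrM -natrB // -natrM -natrD ler_nat in L2.
set e := e_in (G1 (noloops adj)) X.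
have B1 := S_lo hsym hC4 hdeg X.
rewrite -/S -/e -/k in B1.
have d1 : (0 < q + 1)%N by rewrite addn1.
have B2 := S_hi hsym hC4 hdeg X d1.
rewrite addn1 /= -/S -/e -/k in B2.
have ht := bin2_twice k.
have D0 : (0 < q ^ 2 + 1)%N by rewrite addn1.
have q1 : (1 <= q)%N by lia.
have B2' : (S <= 2 * e + (q + 1) * k + 2 * q * k)%N by move: B2; lia.
apply: final_rat => //.
  have H := N1 (q := q) (k := k) (e := e) (S := S) (D := q ^ 2 + 1)
     (t := 2 * 'C(k, 2)) q1 D0 ht (conv1 hn kkn L2) B1.
  lia.
have H := N2 (q := q) (k := k) (e := e) (S := S) (D := q ^ 2 + 1)
     (t := 2 * 'C(k, 2)) q1 ht (conv2 hn L1) B2'.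
lia.
Qed.
End Main.

Theorem mainTheorem3 (q : nat) (hq : (2 <= q)%N)
  (adj : rel 'I_((q ^ 2 + 1) * (q + 1)))
  (hsym : symmetric adj)
  (hdeg : forall x, #|[set y | adj x y]| = (q + 1)%N)
  (hspec : exists s : seq algC,
     [/\ size s = ((q ^ 2 + 1) * (q + 1)).-1,
         char_poly (adjmx adj)
           = ('X - ((q + 1)%:R)%:P) * \prod_(a <- s) ('X - a%:P)
       & forall a, a \in s -> `|a| <= sqrtC (2 * q)%:R]%R)
  (hC3 : no_C3 (noloops adj))
  (hC4 : no_C4 (noloops adj)) :
  jumbled (G1 (noloops adj)) (q%:R / (q ^ 2 + 1)%:R)%R (2 * q + 1)%:R%R.
Proof. exact: (main_gen hq erefl hsym hdeg hspec hC4). Qed.
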